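(* Let $\tilde k$ be an $\mathbb R^\times_{>0}$-graded field and let $f\colon\mathcal X\to\mathcal Y$ and $g\colon\mathcal Y\to\mathcal Z$ be morphisms in $\mathrm{bir}_{\tilde k}$ such that $g\circ f$ is proper. Assume that either $g$ is separated or $f$ is proper. Then both $f$ and $g$ are proper.
   Context: A $G$-graded ring ($G=\mathbb R^\times_{>0}$) is $A=\oplus_{g\in G}A_g$; a graded field is a nonzero graded ring whose nonzero homogeneous elements are invertible. A graded valuation ring of a graded field $K$ is a graded subring $\mathcal O$ such that for every nonzero homogeneous $f\in K$, $f\in\mathcal O$ or $f^{-1}\in\mathcal O$. For graded fields $\tilde k\subseteq K$, $\mathbf P_{K/\tilde k}$ is the set of graded valuation rings of $K$ containing $\tilde k$, topologized by the basis of sets $\{\mathcal O: f_1,\dots,f_n\in\mathcal O\}$ for homogeneous $f_i\in K$. An object of $\mathrm{bir}_{\tilde k}$ is $\mathcal X=(X\to\mathbf P_{K/\tilde k})$: a graded field extension $K/\tilde k$ and a local homeomorphism $X\to\mathbf P_{K/\tilde k}$ with $X$ non-empty, connected, quasi-compact and quasi-separated. A morphism $(Y\to\mathbf P_{L/\tilde k})\to(X\to\mathbf P_{K/\tilde k})$ is a graded $\tilde k$-embedding $K\hookrightarrow L$ and a continuous map $Y\to X$ compatible with the restriction map $\mathbf P_{L/\tilde k}\to\mathbf P_{K/\tilde k}$, $\mathcal O\mapsto\mathcal O\cap K$. Such a morphism is separated (resp. proper) if the induced map $Y\to X\times_{\mathbf P_{K/\tilde k}}\mathbf P_{L/\tilde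 k}$ is injective (resp. bijective). *)

(* Defs.v *)
From HB Require Import structures.
From Stdlib Require Import Rdefinitions RIneq.
From mathcomp Require Import all_boot all_algebra.
From mathcomp Require Import boolp classical_sets topology.
Set Implicit Arguments. Unset Strict Implicit. Unset Printing Implicit Defensive.
Import GRing.Theory.
Local Open Scope classical_set_scope.
Local Open Scope ring_scope.

Definition Gpos : Type := {r : Rdefinitions.R | Rdefinitions.Rlt Rdefinitions.R0 r}.
Definition Gmul (g h : Gpos) : Gpos :=
  exist _ (Rdefinitions.Rmult (proj1_sig g) (proj1_sig h))
    (Rmult_lt_0_compat _ _ (proj2_sig g) (proj2_sig h)).

Definition is_grading (A : comPzRingType) (comp : Gpos -> set A) : Prop :=
  [/\ (forall g, comp g 0),
      (forall g a b, comp g a -> comp g b -> comp g (a - b)),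
      (forall g h a b, comp g a -> comp h b -> comp (Gmul g h) (a * b)),
      (forall a : A, exists n (d : 'I_n -> Gpos) (c : 'I_n -> A),
          (forall i, comp (d i) (c i)) /\ a = \sum_(i < n) c i) &
      (forall n (d : 'I_n -> Gpos) (c : 'I_n -> A), injective d ->
          (forall i, comp (d i) (c i)) -> \sum_(i < n) c i = 0 ->
          forall i, c i = 0)].

Record gradedRing := GradedRing {
  gcar :> comPzRingType;
  gcomp : Gpos -> set gcar;
  gcompP : is_grading gcomp }.

Definition homogeneous (A : gradedRing) (a : A) : Prop := exists g, gcomp g a.

Definition graded_field (K : gradedRing) : Prop :=
  (1 : K) != 0 /\
  forall a : K, homogeneous a -> a != 0 -> exists b : K, a * b = 1.

Definition graded_embedding (A B : gradedRing) (phi : A -> B) : Prop :=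
  [/\ (forall a b, phi (a - b) = phi a - phi b),
      (forall a b, phi (a * b) = phi a * phi b),
      phi 1 = 1, injective phi &
      (forall g a, gcomp g a -> gcomp g (phi a))].

Definition graded_subring (K : gradedRing) (O : set K) : Prop :=
  [/\ O 1, (forall a b, O a -> O b -> O (a - b)),
      (forall a b, O a -> O b -> O (a * b)) &
      (forall a, O a -> exists n (d : 'I_n -> Gpos) (c : 'I_n -> K),
          (forall i, gcomp (d i) (c i) /\ O (c i)) /\ a = \sum_(i < n) c i)].

Definition graded_valuation_ring (K : gradedRing) (O : set K) : Prop :=
  graded_subring O /\
  forall f : K, homogeneous f -> f != 0 ->
    O f \/ (exists h : K, f * h = 1 /\ O h).

(* points of P_{K/k}: graded valuation rings of K containing (the image of) k *)
Definition Ppt (k K : gradedRing) (iota : k -> K) (O : set K) : Prop :=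
  graded_valuation_ring O /\ forall a : k, O (iota a).

(* open subsets of P_{K/k}, for the topology with basis
   {O : f_1,...,f_n in O}, f_i homogeneous *)
Definition Popen (k K : gradedRing) (iota : k -> K) (U : set (set K)) : Prop :=
  (forall O, U O -> Ppt iota O) /\
  forall O, U O -> exists n (fs : 'I_n -> K),
    [/\ (forall i, homogeneous (fs i)), (forall i, O (fs i)) &
        (forall O', Ppt iota O' -> (forall i, O' (fs i)) -> U O')].

(* pi : X -> P_{K/k} is a local homeomorphism: every x has an open
   neighbourhood U with pi(U) open and pi|_U : U -> pi(U) a homeomorphism
   (bijective, continuous and open for the subspace topologies). *)
Definition local_homeo (k K : gradedRing) (iota : k -> K) (X : topologicalType)
    (pi : X -> set K) : Prop :=
  (forall x, Ppt iota (pi x)) /\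
  forall x, exists U : set X,
    [/\ open U /\ U x, Popen iota (pi @` U),
        (forall y z, U y -> U z -> pi y = pi z -> y = z),
        (forall W, Popen iota W -> W `<=` pi @` U -> open (U `&` pi @^-1` W)) &
        (forall V, V `<=` U -> open V -> Popen iota (pi @` V))].

Definition quasi_separated (X : topologicalType) : Prop :=
  forall U V : set X, open U -> compact U -> open V -> compact V ->
    compact (U `&` V).

(* an object (X -> P_{K/k}) of bir_k, with K/k given by a graded embedding *)
Record birObj (k : gradedRing) := BirObj {
  oK : gradedRing;
  oiota : k -> oK;
  oX : topologicalType;
  opi : oX -> set oK }.
Arguments opi {k} b _.
Arguments oiota {k} b _.

Definition is_birObj (k : gradedRing) (c : birObj k) : Prop :=
  [/\ graded_field k /\ graded_field (oK c), graded_embedding (oiota c),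
      local_homeo (oiota c) (opi c),
      (exists x : oX c, True) /\ connected (@setT (oX c)) &
      (compact (@setT (oX c)) /\ quasi_separated (oX c))].

(* a morphism (Y -> P_L) -> (X -> P_K): graded k-embedding phi : K -> L and
   continuous f : Y -> X compatible with O |-> phi^{-1}(O) *)
Definition is_birMor (k : gradedRing) (cY cX : birObj k)
    (phi : oK cX -> oK cY) (f : oX cY -> oX cX) : Prop :=
  [/\ graded_embedding phi, (forall a, phi (oiota cX a) = oiota cY a),
      continuous f &
      (forall y, opi cX (f y) = phi @^-1` (opi cY y))].

(* Y -> X x_{P_K} P_L,  y |-> (f y, pi_Y y) injective *)
Definition bir_separated (k : gradedRing) (cY cX : birObj k)
    (phi : oK cX -> oK cY) (f : oX cY -> oX cX) : Prop :=
  forall y1 y2, f y1 = f y2 -> opi cY y1 = opi cY y2 -> y1 = y2.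

(* ... bijective *)
Definition bir_proper (k : gradedRing) (cY cX : birObj k)
    (phi : oK cX -> oK cY) (f : oX cY -> oX cX) : Prop :=
  bir_separated phi f /\
  forall (x : oX cX) (O : set (oK cY)), Ppt (oiota cY) O ->
    opi cX x = phi @^-1` O -> exists y, f y = x /\ opi cY y = O.

(* Main.v *)
Require Import Defs.
From HB Require Import structures.
From Stdlib Require Import Rdefinitions RIneq.
From mathcomp Require Import all_boot all_algebra.
From mathcomp Require Import boolp classical_sets topology.
From mathcomp Require Import zify.
Set Implicit Arguments. Unset Strict Implicit. Unset Printing Implicit Defensive.
Import GRing.Theory.
Local Open Scope classical_set_scope.
Local Open Scope ring_scope.

HB.instance Definition _ := gen_eqMixin Gpos.

Lemma Gpos_eq (x y : Gpos) : proj1_sig x = proj1_sig y -> x = y.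
Proof.
case: x => x hx; case: y => y hy /= e; subst y.
by rewrite (Prop_irrelevance hx hy).
Qed.

Definition G1 : Gpos := exist _ R1 Rlt_0_1.
Definition Ginv (g : Gpos) : Gpos := exist _ (Rinv (proj1_sig g)) (Rinv_0_lt_compat _ (proj2_sig g)).

Lemma GmulV g : Gmul g (Ginv g) = G1.
Proof. apply: Gpos_eq => /=; apply: Rinv_r; apply: Rgt_not_eq; exact: (proj2_sig g). Qed.

Lemma Gmul_cancel g d d' : Gmul g d = Gmul g d' -> d = d'.
Proof.
move=> /(f_equal (@proj1_sig _ _)) /= e; apply: Gpos_eq.
apply: (Rmult_eq_reg_l (proj1_sig g)) => //; apply: Rgt_not_eq; exact: (proj2_sig g).
Qed.

Lemma Gmul1 g : Gmul g G1 = g.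
Proof. by apply: Gpos_eq => /=; rewrite Rmult_1_r. Qed.

Lemma GmulC g h : Gmul g h = Gmul h g.
Proof. by apply: Gpos_eq => /=; rewrite Rmult_comm. Qed.

Section GR.
Context (A : gradedRing).
Let comp := @gcomp A.

Lemma comp0 g : gcomp g (0 : A).
Proof. by case: (gcompP A). Qed.
Lemma compB g a b : gcomp g a -> gcomp g b -> gcomp g (a - b :> A).
Proof. by case: (gcompP A) => _ H *; apply: H. Qed.
Lemma compM g h a b : gcomp g a -> gcomp h b -> gcomp (Gmul g h) (a * b : A).
Proof. by case: (gcompP A) => _ _ H *; apply: H. Qed.
Lemma compN g a : gcomp g a -> gcomp g (- a : A).
Proof. by move=> ha; rewrite -sub0r; apply: compB => //; apply: comp0. Qed.
Lemma compD g a b : gcomp g a -> gcomp g b -> gcomp g (a + b : A).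
Proof. by move=> ha hb; rewrite -[b]opprK; apply: compB => //; apply: compN. Qed.
Lemma comp_sum (I : Type) (r : seq I) (P : pred I) (F : I -> A) g :
  (forall i, P i -> gcomp g (F i)) -> gcomp g (\sum_(i <- r | P i) F i).
Proof.
move=> H; elim/big_rec: _ => [|i x Pi hx]; first exact: comp0.
by apply: compD => //; apply: H.
Qed.

Lemma comp_sum_seq (I : eqType) (r : seq I) (P : pred I) (F : I -> A) g :
  (forall i, i \in r -> P i -> gcomp g (F i)) -> gcomp g (\sum_(i <- r | P i) F i).
Proof.
move=> H; rewrite big_seq_cond; apply: comp_sum => i /andP [] *; exact: H.
Qed.

Definition homl (s : seq (Gpos * A)) := forall p, p \in s -> gcomp p.1 p.2.

Lemma sum_split_deg (s : seq (Gpos * A)) :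
  \sum_(p <- s) p.2 = \sum_(g <- undup (map fst s)) \sum_(p <- s | p.1 == g) p.2.
Proof.
rewrite (exchange_big_dep xpredT) //=.
rewrite big_seq [RHS]big_seq; apply: eq_bigr => p ps.
rewrite (eq_bigl (pred1 p.1)); last by move=> g /=; rewrite eq_sym.
rewrite -big_filter filter_pred1_uniq ?undup_uniq ?big_seq1 //.
by rewrite mem_undup; apply: map_f.
Qed.

Lemma decomp_list (a : A) : exists s, homl s /\ a = \sum_(p <- s) p.2.
Proof.
case: (gcompP A) => _ _ _ H _; have [n [d [c [hc ->]]]] := H a.
exists [seq (d i, c i) | i <- enum 'I_n]; split.
  by move=> p /mapP [i _ ->]; apply: hc.
by rewrite big_map big_enum.
Qed.

Definition dp : Gpos * A := (G1, 0).

Lemma Zdeg (s : seq (Gpos * A)) : homl s -> \sum_(p <- s) p.2 = 0 ->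
  forall g, \sum_(p <- s | p.1 == g) p.2 = 0.
Proof.
move=> hs s0 g.
set U := undup (map fst s).
pose t := [seq (h, \sum_(p <- s | p.1 == h) p.2) | h <- U].
have ut : uniq (map fst t) by rewrite -map_comp map_id undup_uniq.
have t0 : forall i, (i < size t)%N -> (nth dp t i).2 = 0.
  case: (gcompP A) => _ _ _ _ H.
  have := H (size t) (fun i => nth G1 (map fst t) i) (fun i => (nth dp t i).2).
  move=> H' i hi; apply: (H' _ _ _ (Ordinal hi)).
  - move=> i1 i2 /eqP; rewrite nth_uniq ?size_map //; last first.
    by move=> /eqP; apply: val_inj.
  - move=> i0; rewrite (nth_map dp) //= /t.
    have hiU : (nat_of_ord i0 < size U)%N by rewrite -(size_map (fun h => (h, \sum_(p <- s | p.1 == h) p.2))) ltn_ord.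
    rewrite (nth_map G1) //=.
    apply: comp_sum_seq => p ps /eqP <-; exact: hs.
  - rewrite -(big_mkord xpredT (fun i => (nth dp t i).2)).
    rewrite -(big_nth dp xpredT (fun p => p.2)) big_map /=.
    by rewrite -sum_split_deg.
have [gU|gU] := boolP (g \in U).
  have := t0 (index g U); rewrite size_map index_mem => /(_ gU).
  by rewrite (nth_map G1) ?index_mem //= nth_index.
apply: big1_seq => p /andP [/eqP pg ps]; case/negP: gU.
by rewrite mem_undup -pg; apply: map_f.
Qed.
Lemma KL (a : A) g (s : seq (Gpos * A)) : gcomp g a -> homl s ->
  (forall p, p \in s -> p.1 != g) -> a = \sum_(p <- s) p.2 -> a = 0.
Proof.
move=> ha hs hd ea.
have hs' : homl ((g, - a) :: s).
  move=> p; rewrite inE => /orP [/eqP -> /=|]; first exact: compN.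
  exact: hs.
have s0 : \sum_(p <- (g, - a) :: s) p.2 = 0 by rewrite big_cons -ea addNr.
have := Zdeg hs' s0 g.
rewrite big_cons /= eqxx (big1_seq (I := (Gpos * A)%type)) ?addr0.
  by move/eqP; rewrite oppr_eq0 => /eqP.
by move=> p /andP [pg ps]; move: (hd _ ps); rewrite pg.
Qed.

Lemma one_comp : gcomp G1 (1 : A).
Proof.
have [s [hs e1]] := decomp_list 1.
set E := \sum_(p <- s | p.1 == G1) p.2.
set R := \sum_(p <- s | p.1 != G1) p.2.
have e1' : 1 = E + R by rewrite e1 (bigID (fun p : Gpos * A => p.1 == G1)).
have cl : forall a g, gcomp g a -> a = a * E.
  move=> a g ha; apply/eqP; rewrite -subr_eq0; apply/eqP.
  apply: (@KL _ g [seq (Gmul g p.1, a * p.2) | p <- s & p.1 != G1]).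
  - apply: compB => //; rewrite -[X in gcomp X _]Gmul1; apply: compM => //.
    by apply: comp_sum_seq => p ps /eqP <-; apply: hs.
  - move=> q /mapP [p]; rewrite mem_filter => /andP [p1 ps] -> /=.
    by apply: compM => //; apply: hs.
  - move=> q /mapP [p]; rewrite mem_filter => /andP [p1 ps] -> /=.
    apply: contra p1 => /eqP e; apply/eqP; apply: (@Gmul_cancel g).
    by rewrite e Gmul1.
  rewrite big_map big_filter -mulr_sumr.
  by apply/eqP; rewrite subr_eq -mulrDr addrC -e1' mulr1.
have -> : (1 : A) = E.
  rewrite [X in X = _]e1 big_seq (eq_bigr (fun p : Gpos * A => p.2 * E)).
    by rewrite -big_seq -mulr_suml -e1 mul1r.
  by move=> p ps; rewrite -(cl _ _ (hs _ ps)).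
by apply: comp_sum_seq => p ps /eqP <-; apply: hs.
Qed.
Lemma inv_comp (f h : A) g : gcomp g f -> f * h = 1 -> gcomp (Ginv g) h.
Proof.
move=> hf fh.
have [s [hs eh]] := decomp_list h.
set S := \sum_(p <- s | p.1 == Ginv g) p.2.
set T := \sum_(p <- s | p.1 != Ginv g) p.2.
have eh' : h = S + T by rewrite eh (bigID (fun p : Gpos * A => p.1 == Ginv g)).
have hS : gcomp (Ginv g) S by apply: comp_sum_seq => p ps /eqP <-; apply: hs.
have fT0 : 1 - f * S = 0.
  apply: (@KL _ G1 [seq (Gmul g p.1, f * p.2) | p <- s & p.1 != Ginv g]).
  - apply: compB; first exact: one_comp.
    by rewrite -(GmulV g); apply: compM.
  - move=> q /mapP [p]; rewrite mem_filter => /andP [p1 ps] -> /=.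
    by apply: compM => //; apply: hs.
  - move=> q /mapP [p]; rewrite mem_filter => /andP [p1 ps] -> /=.
    apply: contra p1 => /eqP e; apply/eqP; apply: (@Gmul_cancel g).
    by rewrite e GmulV.
  rewrite big_map big_filter -mulr_sumr.
  by apply/eqP; rewrite subr_eq -mulrDr addrC -eh' fh.
have fT : f * T = 0.
  by move: fT0; rewrite -fh eh' mulrDr addrAC subrr add0r.
have T0 : T = 0 by rewrite -[T]mul1r -fh mulrC mulrA [T * _]mulrC fT mul0r.
by rewrite eh' T0 addr0.
Qed.
End GR.

Section Hor.
Context (L : comPzRingType) (S B : set L).
Hypothesis S0 : S 0.
Hypothesis SD : forall a b, S a -> S b -> S (a + b).
Hypothesis SM : forall a b, S a -> B b -> S (a * b).

Fixpoint Hor (x : L) (n : nat) : set L :=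
  match n with
  | 0 => [set 0]
  | n.+1 => fun y => exists c p, [/\ S c, Hor x n p & y = c + x * p]
  end.

Lemma Hor_add x n y z : Hor x n y -> Hor x n z -> Hor x n (y + z).
Proof.
elim: n y z => [|n IH] y z /=; first by move=> -> ->; rewrite addr0.
move=> [c [p [Sc hp ->]]] [c' [p' [Sc' hp' ->]]].
exists (c + c'), (p + p'); split; [exact: SD|exact: IH|].
by rewrite mulrDr addrACA.
Qed.

Lemma Hor_mul x n y b : Hor x n y -> B b -> Hor x n (y * b).
Proof.
elim: n y => [|n IH] y /=; first by move=> ->; rewrite mul0r.
move=> [c [p [Sc hp ->]]] Bb.
exists (c * b), (p * b); split; [exact: SM|exact: IH|].
by rewrite mulrDl mulrA.
Qed.

Lemma Hor_mono x n y : Hor x n y -> Hor x n.+1 y.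
Proof.
elim: n y => [|n IH] y /=.
  by move=> ->; exists 0, 0; split => //; rewrite mulr0 addr0.
move=> [c [p [Sc hp ->]]]; exists c, p; split => //; exact: IH.
Qed.

Lemma Hor_mono_le x n m y : (n <= m)%N -> Hor x n y -> Hor x m y.
Proof.
move=> /subnK <-; elim: (m - n)%N => [|k IH] // h.
by rewrite addSn; apply: Hor_mono; apply: IH.
Qed.

Lemma Hor_shift x n y : Hor x n y -> Hor x n.+1 (x * y).
Proof. by move=> h; exists 0, y; split => //; rewrite add0r. Qed.

Lemma Hor_shiftk x n k y : Hor x n y -> Hor x (n + k) (x ^+ k * y).
Proof.
elim: k => [|k IH] h; first by rewrite addn0 expr0 mul1r.
by rewrite addnS exprS -mulrA; apply: Hor_shift; apply: IH.
Qed.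

Lemma Hor_const x c : S c -> Hor x 1 c.
Proof. by move=> Sc; exists c, 0; split => //; rewrite mulr0 addr0. Qed.

Lemma Hor_top x n y : Hor x n.+1 y -> exists p c, [/\ Hor x n p, S c & y = p + c * x ^+ n].
Proof.
elim: n y => [|n IH] y /=.
  move=> [c [p [Sc -> ->]]]; exists 0, c; split => //.
  by rewrite mulr0 addr0 add0r expr0 mulr1.
move=> [c [q [Sc hq ->]]]; have [p [c' [hp Sc' ->]]] := IH _ hq.
exists (c + x * p), c'; split => //; first by exists c, p.
by rewrite mulrDr addrA exprS mulrCA.
Qed.

Lemma Hor_T x h k q : x * h = 1 -> Hor h k.+1 q -> Hor x k.+1 (x ^+ k * q).
Proof.
move=> xh; elim: k q => [|k IH] q.
  move=> [c [p [Sc -> ->]]]; rewrite mulr0 addr0 expr0 mul1r.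
  exact: Hor_const.
move=> [c [q' [Sc hq' ->]]].
rewrite mulrDr.
have -> : x ^+ k.+1 * (h * q') = x ^+ k * q'.
  by rewrite exprSr mulrA -(mulrA (x ^+ k) x h) xh mulr1.
apply: Hor_add.
  by have := Hor_shiftk k.+1 (Hor_const x Sc); rewrite add1n.
by apply: Hor_mono; apply: IH.
Qed.

Hypothesis SB : forall a, S a -> B a.
Hypothesis B1 : B 1.
Hypothesis BB : forall a b, B a -> B b -> B (a - b).

Lemma Hor_step x h N M : x * h = 1 -> (M <= N)%N ->
  Hor x N.+2 1 -> Hor h M.+2 1 -> Hor x N.+1 1.
Proof.
move=> xh MN hx [d0 [q [Sd0 hq e1]]].
set e := h * q.
have Be : B e.
  have -> : e = 1 - d0 by rewrite e1 addrAC subrr add0r.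
  by apply: BB => //; apply: SB.
have [p [c [hp Sc ep]]] := Hor_top hx.
have xe : Hor x N.+1 (x ^+ N.+1 * e).
  have -> : x ^+ N.+1 * e = x ^+ (N - M) * (x ^+ M * q).
    rewrite mulrA -exprD subnK // /e exprSr mulrA -(mulrA (x ^+ N) x h) xh mulr1 //.
  have := Hor_shiftk (N - M) (Hor_T xh hq).
  by rewrite addSn subnKC.
have he : Hor x N.+1 e.
  have -> : e = p * e + (x ^+ N.+1 * e) * c.
    by rewrite mulrAC (mulrC _ c) -mulrDl -ep mul1r.
  by apply: Hor_add; apply: Hor_mul => //; apply: SB.
rewrite e1; apply: Hor_add => //.
by apply: (@Hor_mono_le _ 1) => //; apply: Hor_const.
Qed.

Lemma Hor_reduce K : forall n m x h, (n + m <= K)%N -> x * h = 1 ->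
  Hor x n 1 -> Hor h m 1 -> S 1.
Proof.
have base : forall x n, (n <= 1)%N -> Hor x n 1 -> S 1.
  move=> x [|[|n]] // _ /=; first by move->.
  by move=> [c [p [Sc -> ->]]]; rewrite mulr0 addr0.
elim: K => [|K IH] n m x h.
  by rewrite leqn0 addn_eq0 => /andP [/eqP -> _] _ hx _; exact: (base x 0).
case: n => [|[|N]]; first by move=> _ _ hx _; exact: (base x 0).
  by move=> _ _ hx _; exact: (base x 1).
case: m => [|[|M]]; first by move=> _ _ _ hh; exact: (base h 0).
  by move=> _ _ _ hh; exact: (base h 1).
move=> hK xh hx hh.
have [MN|NM] := leqP M N.
  by apply: (IH N.+1 M.+2 x h); [lia| done | exact: Hor_step hx hh | done].
have hx' : h * x = 1 by rewrite mulrC.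
by apply: (IH M.+1 N.+2 h x); [lia| done | exact: (Hor_step hx' (ltnW NM) hh hx) | done].
Qed.

End Hor.

Section Ext.
Context (K L : gradedRing) (phi : K -> L) (O : set K).
Hypothesis fK : graded_field K.
Hypothesis fL : graded_field L.
Hypothesis emb : graded_embedding phi.
Hypothesis vO : graded_valuation_ring O.

Lemma phiB a b : phi (a - b) = phi a - phi b.
Proof. by case: emb. Qed.
Lemma phiM a b : phi (a * b) = phi a * phi b.
Proof. by case: emb. Qed.
Lemma phi1 : phi 1 = 1.
Proof. by case: emb. Qed.
Lemma phi_inj : injective phi.
Proof. by case: emb. Qed.
Lemma phi_comp g a : gcomp g a -> gcomp g (phi a).
Proof. by case: emb => _ _ _ _; apply. Qed.
Lemma phi0 : phi 0 = 0.
Proof. by rewrite -(subrr (0:K)) phiB subrr. Qed.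
Lemma phiN a : phi (- a) = - phi a.
Proof. by rewrite -sub0r phiB phi0 sub0r. Qed.
Lemma phiD a b : phi (a + b) = phi a + phi b.
Proof. by have := phiB a (- b); rewrite opprK => ->; rewrite phiN opprK. Qed.
Lemma phi_sum (I : Type) (r : seq I) (P : pred I) (F : I -> K) :
  phi (\sum_(i <- r | P i) F i) = \sum_(i <- r | P i) phi (F i).
Proof. exact: (big_morph phi phiD phi0). Qed.

Lemma O1 : O 1. Proof. by case: vO => [[]]. Qed.
Lemma OB a b : O a -> O b -> O (a - b). Proof. by case: vO => [[]] _ H *; apply: H. Qed.
Lemma OM a b : O a -> O b -> O (a * b). Proof. by case: vO => [[]] _ _ H *; apply: H. Qed.
Lemma O0 : O 0. Proof. by rewrite -(subrr (1:K)); apply: OB; apply: O1. Qed.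
Lemma ON a : O a -> O (- a). Proof. by move=> h; rewrite -sub0r; apply: OB => //; apply: O0. Qed.
Lemma OD a b : O a -> O b -> O (a + b). Proof. by move=> ha hb; rewrite -[b]opprK; apply: OB => //; apply: ON. Qed.
Lemma O_sum (I : eqType) (r : seq I) (F : I -> K) : (forall i, i \in r -> O (F i)) -> O (\sum_(i <- r) F i).
Proof.
move=> H; rewrite big_seq; elim/big_rec: _ => [|i x ir hx]; first exact: O0.
by apply: OD => //; apply: H.
Qed.
Lemma Odecomp a : O a -> exists n (d : 'I_n -> Gpos) (c : 'I_n -> K),
          (forall i, gcomp (d i) (c i) /\ O (c i)) /\ a = \sum_(i < n) c i.
Proof. by case: vO => [[]] _ _ _ H _; apply: H. Qed.
Lemma Oval f : homogeneous f -> f != 0 -> O f \/ (exists h : K, f * h = 1 /\ O h).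
Proof. by case: vO => _; apply. Qed.

Definition nonunit (y : K) := ~ (exists v, O v /\ y * v = 1).
Definition mh (u : K) := [/\ O u, homogeneous u & nonunit u].

Lemma nonunit_sum x y : gcomp G1 x -> gcomp G1 y -> O x -> O y ->
  nonunit x -> nonunit y -> nonunit (x + y).
Proof.
move=> cx cy Ox Oy nx ny [v [Ov e]].
have [y0|ynz] := eqVneq y 0.
  by apply: nx; exists v; rewrite y0 addr0 in e.
case: fK => _ /(_ y (ex_intro _ G1 cy) ynz) [yi yyi].
have cyi : gcomp (Ginv G1) yi := inv_comp cy yyi.
set w := x * yi.
have hw : homogeneous w by exists (Gmul G1 (Ginv G1)); apply: compM.
have yw : y * w = x by rewrite /w mulrCA yyi mulr1.
have [w0|wnz] := eqVneq w 0.
  apply: ny; exists v; split => //.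
  by move: e; rewrite -yw w0 mulr0 add0r.
case: (Oval hw wnz) => [Ow|[z [wz Oz]]].
  apply: ny; exists ((1 + w) * v); split; first by apply: OM => //; apply: OD => //; apply: O1.
  by rewrite mulrA mulrDr mulr1 yw addrC.
have xz : x * z = y by rewrite -yw -mulrA wz mulr1.
apply: nx; exists ((1 + z) * v); split; first by apply: OM => //; apply: OD => //; apply: O1.
by rewrite mulrA mulrDr mulr1 xz.
Qed.

Lemma decomp_terms (s : seq (K * K)) : (forall p, p \in s -> mh p.1 /\ O p.2) ->
  exists t : seq (Gpos * K), (forall q, q \in t -> [/\ gcomp q.1 q.2, O q.2 & nonunit q.2]) /\
    \sum_(p <- s) p.1 * p.2 = \sum_(q <- t) q.2.
Proof.
elim: s => [|p s IH] hs; first by exists [::]; split => //; rewrite !big_nil.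
have [t [ht et]] : exists t : seq (Gpos * K), (forall q, q \in t -> [/\ gcomp q.1 q.2, O q.2 & nonunit q.2]) /\
    \sum_(p <- s) p.1 * p.2 = \sum_(q <- t) q.2.
  by apply: IH => q qs; apply: hs; rewrite inE qs orbT.
have [[Ou [g hu] nu] Op] := hs p (mem_head _ _).
have [n [d [c [hc ec]]]] := Odecomp Op.
exists ([seq (Gmul g (d i), p.1 * c i) | i <- enum 'I_n] ++ t); split.
  move=> q; rewrite mem_cat => /orP [/mapP [i _ -> /=]|]; last exact: ht.
  have [hci Oci] := hc i; split; [exact: compM | exact: OM |].
  move=> [v [Ov e]]; apply: nu; exists (c i * v); split; first exact: OM.
  by rewrite mulrA.
by rewrite big_cons big_cat /= big_map big_enum /= et ec mulr_sumr.
Qed.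

Lemma nonunit_list (t : seq (Gpos * K)) :
  (forall q, q \in t -> [/\ gcomp G1 q.2, O q.2 & nonunit q.2]) ->
  [/\ gcomp G1 (\sum_(q <- t) q.2), O (\sum_(q <- t) q.2) & nonunit (\sum_(q <- t) q.2)].
Proof.
elim: t => [|q t IH] ht.
  rewrite big_nil; split; [exact: comp0 | exact: O0 |].
  by move=> [v [_]]; rewrite mul0r => /eqP; case: fK => /negP; rewrite eq_sym.
have [c1 o1 n1] := ht q (mem_head _ _).
have [c2 o2 n2] : [/\ gcomp G1 (\sum_(q <- t) q.2), O (\sum_(q <- t) q.2) & nonunit (\sum_(q <- t) q.2)].
  by apply: IH => q' q't; apply: ht; rewrite inE q't orbT.
rewrite big_cons; split; [exact: compD | exact: OD | exact: nonunit_sum].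
Qed.

Lemma O_good (s : seq (K * K)) : (forall p, p \in s -> mh p.1 /\ O p.2) ->
  \sum_(p <- s) p.1 * p.2 <> 1.
Proof.
move=> hs e1.
have [t [ht et]] := decomp_terms hs.
have hl : homl ((G1, -1) :: t).
  move=> q; rewrite inE => /orP [/eqP -> /=|qt]; first by apply: compN; apply: one_comp.
  by have [] := ht q qt.
have s0 : \sum_(q <- (G1, -1) :: t) q.2 = 0 by rewrite big_cons /= -et e1 addNr.
have := Zdeg hl s0 G1; rewrite big_cons /= eqxx -big_filter.
have hf : forall q, q \in [seq q <- t | q.1 == G1] -> [/\ gcomp G1 q.2, O q.2 & nonunit q.2].
  move=> q; rewrite mem_filter => /andP [/eqP q1 qt]; have [] := ht q qt.
  by rewrite q1.
have [_ _ nu] := nonunit_list hf.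
move=> e; apply: nu; exists 1; split; first exact: O1.
by rewrite mulr1; apply/eqP; rewrite -subr_eq0 addrC e.
Qed.

Definition SR (A : set L) := [/\ A 1, (forall a b, A a -> A b -> A (a - b)) &
  (forall a b, A a -> A b -> A (a * b))].
Definition Iset (A : set L) : set L := fun y => exists s : seq (K * L),
  (forall p, p \in s -> mh p.1 /\ A p.2) /\ y = \sum_(p <- s) phi p.1 * p.2.
Definition Good (A : set L) := [/\ SR A, (forall o, O o -> A (phi o)) & ~ Iset A 1].

Section SRfacts.
Variable A : set L.
Hypothesis hA : SR A.
Lemma A1 : A 1. Proof. by case: hA. Qed.
Lemma AB a b : A a -> A b -> A (a - b). Proof. by case: hA => _ H _; apply: H. Qed.
Lemma AM a b : A a -> A b -> A (a * b). Proof. by case: hA => _ _ H; apply: H. Qed.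
Lemma A0 : A 0. Proof. by rewrite -(subrr (1:L)); apply: AB; apply: A1. Qed.
Lemma AN a : A a -> A (- a). Proof. by move=> h; rewrite -sub0r; apply: AB => //; apply: A0. Qed.
Lemma AD a b : A a -> A b -> A (a + b). Proof. by move=> ha hb; rewrite -[b]opprK; apply: AB => //; apply: AN. Qed.
Lemma A_sum (I : eqType) (r : seq I) (P : pred I) (F : I -> L) :
  (forall i, i \in r -> P i -> A (F i)) -> A (\sum_(i <- r | P i) F i).
Proof.
move=> H; rewrite big_seq_cond; elim/big_rec: _ => [|i x /andP [ir Pi] hx]; first exact: A0.
by apply: AD => //; apply: H.
Qed.

Lemma Iset0 : Iset A 0. Proof. by exists [::]; split => //; rewrite big_nil. Qed.
Lemma IsetD a b : Iset A a -> Iset A b -> Iset A (a + b).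
Proof.
move=> [s [hs ->]] [t [ht ->]]; exists (s ++ t); split; last by rewrite big_cat.
by move=> p; rewrite mem_cat => /orP [/hs|/ht].
Qed.
Lemma IsetM c b : Iset A c -> A b -> Iset A (c * b).
Proof.
move=> [s [hs ->]] Ab; exists [seq (p.1, p.2 * b) | p <- s]; split.
  move=> q /mapP [p ps -> /=]; have [? ?] := hs p ps; split => //; exact: AM.
by rewrite big_map mulr_suml; apply: eq_bigr => p _ /=; rewrite mulrA.
Qed.
Lemma Iset1 u a : mh u -> A a -> Iset A (phi u * a).
Proof. by move=> hu ha; exists [:: (u, a)]; split; [move=> p; rewrite inE => /eqP -> | rewrite big_seq1]. Qed.
Hypothesis hO : forall o, O o -> A (phi o).
Lemma IsetA c : Iset A c -> A c.
Proof.
move=> [s [hs ->]]; apply: A_sum => p ps _; have [[Ou _ _] Ap] := hs p ps.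
by apply: AM => //; apply: hO.
Qed.
End SRfacts.

Definition B0 : set L := phi @` O.

Lemma Good_B0 : Good B0.
Proof.
split.
- split; first by exists 1; [exact: O1 | exact: phi1].
  + by move=> _ _ [a Oa <-] [b Ob <-]; exists (a - b); [exact: OB | exact: phiB].
  + by move=> _ _ [a Oa <-] [b Ob <-]; exists (a * b); [exact: OM | exact: phiM].
- by move=> o Oo; exists o.
move=> [s [hs e1]].
have [s' [hs' es']] : exists s' : seq (K * K), (forall p, p \in s' -> mh p.1 /\ O p.2) /\
   \sum_(p <- s) phi p.1 * p.2 = phi (\sum_(p <- s') p.1 * p.2).
  elim: s hs {e1} => [|p s IH] hs.
    by exists [::]; split => //; rewrite !big_nil phi0.
  have [s' [hs' es']] : exists s' : seq (K * K), (forall p, p \in s' -> mh p.1 /\ O p.2) /\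
      \sum_(p <- s) phi p.1 * p.2 = phi (\sum_(p <- s') p.1 * p.2).
    by apply: IH => q qs; apply: hs; rewrite inE qs orbT.
  have [mp [o Oo eo]] := hs p (mem_head _ _).
  exists ((p.1, o) :: s'); split.
    by move=> q; rewrite inE => /orP [/eqP -> //|]; apply: hs'.
  by rewrite !big_cons es' phiD phiM eo.
apply: (O_good hs'); apply: phi_inj; rewrite phi1 -es' -e1 //.
Qed.

Lemma exists_max : exists A, Good A /\ (forall B, Good B -> A `<=` B -> B `<=` A).
Proof.
have := @Zorn_bigcup L (fun A => A = set0 \/ Good A).
case.
- move=> F FP Ftot.
  case: (pselect (exists D, F D /\ Good D)) => [[D0 [FD0 GD0]]|nD]; last first.
    left; apply/seteqP; split => // y [D FD Dy].
    case: (FP D FD) => [e|GD]; first by rewrite e in Dy.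
    by case: nD; exists D.
  right.
  have chain : forall s : seq L, (forall y, y \in s -> (\bigcup_(X in F) X) y) ->
      exists D, [/\ F D, Good D & forall y, y \in s -> D y].
    elim => [|y s IH] hs; first by exists D0; split.
    have [D1 FD1 D1y] := hs y (mem_head _ _).
    have GD1 : Good D1 by case: (FP D1 FD1) => [e|//]; rewrite e in D1y.
    have [D2 [FD2 GD2 h2]] : exists D, [/\ F D, Good D & forall y, y \in s -> D y].
      by apply: IH => z zs; apply: hs; rewrite inE zs orbT.
    case: (Ftot D1 D2 FD1 FD2) => [s12|s21].
      exists D2; split => // z; rewrite inE => /orP [/eqP ->|]; [exact: s12 | exact: h2].
    exists D1; split => // z; rewrite inE => /orP [/eqP -> //|zs]; exact: s21 (h2 _ zs).
  have [[S1 _ _] hO0 _] := GD0.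
  split; first split.
  + by exists D0.
  + move=> a b ha hb.
    have hab : forall y, y \in [:: a; b] -> (\bigcup_(X in F) X) y.
      by move=> y; rewrite !inE => /orP [/eqP ->|/eqP ->].
    have [D [FD GD hD]] := chain _ hab.
    by exists D => //; case: GD => hS _ _; apply: (AB hS); apply: hD; rewrite !inE eqxx ?orbT.
  + move=> a b ha hb.
    have hab : forall y, y \in [:: a; b] -> (\bigcup_(X in F) X) y.
      by move=> y; rewrite !inE => /orP [/eqP ->|/eqP ->].
    have [D [FD GD hD]] := chain _ hab.
    by exists D => //; case: GD => hS _ _; apply: (AM hS); apply: hD; rewrite !inE eqxx ?orbT.
  + by move=> o Oo; exists D0 => //; apply: hO0.
  + move=> [s [hs e1]].
    have hm : forall y, y \in map snd s -> (\bigcup_(X in F) X) y.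
      by move=> y /mapP [p ps ->]; have [] := hs p ps.
    have [D [FD [_ _ nD] hD]] := chain _ hm.
    apply: nD; exists s; split => // p ps; have [? _] := hs p ps; split => //.
    by apply: hD; apply: map_f.
move=> A [PA Amax].
have GA : Good A.
  case: PA => // A0; exfalso; apply: (Amax B0); last by right; apply: Good_B0.
  rewrite A0; split => // /(_ (phi 1)); apply; exists 1 => //; exact: O1.
exists A; split => // B GB AB.
apply: contrapT => nBA; apply: (Amax B); last by right.
by split.
Qed.

Section Adj.
Variable A : set L.
Hypothesis GA : Good A.
Hypothesis Amax : forall B, Good B -> A `<=` B -> B `<=` A.

Let hS : SR A. Proof. by case: GA. Qed.
Let hO : forall o, O o -> A (phi o). Proof. by case: GA. Qed.
Let nI : ~ Iset A 1. Proof. by case: GA. Qed.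

Definition Ax (x : L) : set L := fun y => exists n, Hor A x n y.

Lemma Hor_prod x n m a b : Hor A x n a -> Hor A x m b -> Hor A x (n + m) (a * b).
Proof.
elim: n a => [|n IH] a.
  move=> /= ->; rewrite mul0r add0n => _.
  by apply: (Hor_mono_le (A0 hS) (leq0n m)).
move=> [c [p [Ac hp ->]]] hb.
rewrite mulrDl [c * b]mulrC -mulrA.
apply: (Hor_add (AD hS)).
  by apply: (Hor_mono_le (A0 hS) _ (Hor_mul (AM hS) hb Ac)); lia.
by rewrite addSn; apply: (Hor_shift (A0 hS)); apply: IH.
Qed.

Lemma Ax_SR x : SR (Ax x).
Proof.
split.
- by exists 1%N; apply: Hor_const; apply: A1.
- move=> a b [n ha] [m hb]; exists (maxn n m).
  rewrite -mulrN1; apply: (Hor_add (AD hS)).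
    by apply: (Hor_mono_le (A0 hS) (leq_maxl n m)).
  apply: (Hor_mul (AM hS)); last by apply: AN => //; apply: A1.
  by apply: (Hor_mono_le (A0 hS) (leq_maxr n m)).
- by move=> a b [n ha] [m hb]; exists (n + m)%N; apply: Hor_prod.
Qed.

Lemma A_Ax x : A `<=` Ax x.
Proof. by move=> a ha; exists 1%N; apply: Hor_const. Qed.

Lemma x_Ax x : Ax x x.
Proof.
exists 2%N, 0, 1; split; first exact: (A0 hS).
  by apply: Hor_const; apply: A1.
by rewrite add0r mulr1.
Qed.

Lemma adj_bad x : ~ A x -> Iset (Ax x) 1.
Proof.
move=> nAx; apply: contrapT => nIx; apply: nAx.
apply: (Amax (B := Ax x)); [split | exact: A_Ax | exact: x_Ax].
- exact: Ax_SR.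
- by move=> o Oo; apply: A_Ax; apply: hO.
- exact: nIx.
Qed.

Lemma Hor_single u x n a : mh u -> Hor A x n a -> Hor (Iset A) x n (phi u * a).
Proof.
move=> hu; elim: n a => [|n IH] a; first by move=> /= ->; rewrite mulr0.
move=> [c [p [Ac hp ->]]]; exists (phi u * c), (phi u * p); split.
- exact: Iset1.
- exact: IH.
by rewrite mulrDr mulrCA.
Qed.

Lemma Iset_Ax_Hor x y : Iset (Ax x) y -> exists N, Hor (Iset A) x N y.
Proof.
move=> [s [hs ->]]; elim: s hs => [|p s IH] hs; first by exists 0%N; rewrite big_nil.
have [N2 h2] : exists N, Hor (Iset A) x N (\sum_(p <- s) phi p.1 * p.2).
  by apply: IH => q qs; apply: hs; rewrite inE qs orbT.
have [hu [N1 h1]] := hs p (mem_head _ _).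
exists (maxn N1 N2); rewrite big_cons; apply: (Hor_add (IsetD (A := A))).
  by apply: (Hor_mono_le (Iset0 A) (leq_maxl _ _)); apply: Hor_single.
exact: (Hor_mono_le (Iset0 A) (leq_maxr _ _)).
Qed.

Lemma val_A f h : f * h = 1 -> A f \/ A h.
Proof.
move=> fh; apply: contrapT => /not_orP [nf nh].
have [N1 h1] := Iset_Ax_Hor (adj_bad nf).
have [N2 h2] := Iset_Ax_Hor (adj_bad nh).
apply: nI.
apply: (Hor_reduce (Iset0 A) (@IsetD A) (@IsetM A hS) (IsetA hS hO) (A1 hS) (AB hS) (K := N1 + N2) (leqnn _) fh h1 h2).
Qed.

End Adj.

Definition Oh (A : set L) : set L := fun y => exists s : seq (Gpos * L),
  (forall p, p \in s -> gcomp p.1 p.2 /\ A p.2) /\ y = \sum_(p <- s) p.2.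

Lemma Ext_main : exists O' : set L, graded_valuation_ring O' /\ phi @^-1` O' = O.
Proof.
have [A [GA Amax]] := exists_max.
have [hS hO nI] := GA.
exists (Oh A); split; first split.
- split.
  + exists [:: (G1, 1)]; split; last by rewrite big_seq1.
    move=> p; rewrite inE => /eqP -> /=; split; [exact: one_comp | exact: A1].
  + move=> a b [sa [ha ->]] [sb [hb ->]].
    exists (sa ++ [seq (q.1, - q.2) | q <- sb]); split.
      move=> p; rewrite mem_cat => /orP [/ha //|/mapP [q qb -> /=]].
      by have [? ?] := hb q qb; split; [exact: compN | exact: AN].
    by rewrite big_cat big_map /= sumrN.
  + move=> a b [sa [ha ->]] [sb [hb ->]].
    exists [seq (Gmul p.1 q.1, p.2 * q.2) | p <- sa, q <- sb]; split.
      move=> r /allpairsP [[p q] /= [pa qb ->]] /=.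
      have [? ?] := ha p pa; have [? ?] := hb q qb.
      by split; [exact: compM | exact: AM].
    rewrite big_allpairs_dep /=.
    by rewrite mulr_suml; apply: eq_bigr => p _; rewrite mulr_sumr.
  + move=> a [sa [ha ->]].
    exists (size sa), (fun i => (nth (dp L) sa i).1), (fun i => (nth (dp L) sa i).2); split.
      move=> i; have := ha _ (mem_nth (dp L) (ltn_ord i)) => -[hc hA]; split => //.
      exists [:: (nth (dp L) sa i)]; split; last by rewrite big_seq1.
      by move=> p; rewrite inE => /eqP ->.
    by rewrite (big_nth (dp L)) big_mkord.
- move=> f [g hf] fnz.
  case: fL => _ /(_ f (ex_intro _ g hf) fnz) [h fh].
  have hh := inv_comp hf fh.
  case: (val_A GA Amax fh) => [Af|Ah].
    left; exists [:: (g, f)]; split; last by rewrite big_seq1.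
    by move=> p; rewrite inE => /eqP ->.
  right; exists h; split => //; exists [:: (Ginv g, h)]; split; last by rewrite big_seq1.
  by move=> p; rewrite inE => /eqP ->.
apply/seteqP; split => a /=; last first.
  move=> Oa; have [n [d [c [hc ->]]]] := Odecomp Oa.
  exists [seq (d i, phi (c i)) | i <- enum 'I_n]; split.
    move=> p /mapP [i _ -> /=]; have [? ?] := hc i.
    by split; [exact: phi_comp | exact: hO].
  by rewrite big_map big_enum phi_sum.
move=> [sb [hsb eb]].
have [sa [hsa ea]] := decomp_list a.
have CgO : forall g, O (\sum_(p <- sa | p.1 == g) p.2).
  move=> g; set C := \sum_(p <- sa | p.1 == g) p.2.
  have hC : gcomp g C by apply: comp_sum_seq => p ps /eqP <-; apply: hsa.
  have AC : A (phi C).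
    set u := [seq (p.1, phi p.2) | p <- sa] ++ [seq (q.1, - q.2) | q <- sb].
    have hu : homl u.
      move=> r; rewrite mem_cat => /orP [/mapP [p pa ->]|/mapP [q qb ->]] /=.
        by apply: phi_comp; apply: hsa.
      by apply: compN; have [] := hsb q qb.
    have u0 : \sum_(r <- u) r.2 = 0.
      by rewrite big_cat !big_map /= sumrN -phi_sum -ea -eb subrr.
    have := Zdeg hu u0 g; rewrite big_cat !big_map /= sumrN -phi_sum.
    move/eqP; rewrite subr_eq0 => /eqP ->.
    by apply: (A_sum hS) => q qb _; have [] := hsb q qb.
  apply: contrapT => nC.
  have C0 : C != 0 by apply: contra_notN nC => /eqP ->; exact: O0.
  case: (Oval (ex_intro _ g hC) C0) => [//|[v [Cv Ov]]].
  have hv := inv_comp hC Cv.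
  have mv : mh v.
    split => //; first by exists (Ginv g).
    move=> [w [Ow vw]]; apply: nC.
    have -> : C = w by rewrite -[w]mul1r -Cv -mulrA vw mulr1.
    exact: Ow.
  apply: nI; exists [:: (v, phi C)]; split.
    by move=> p; rewrite inE => /eqP -> /=.
  by rewrite big_seq1 /= -phiM mulrC Cv phi1.
rewrite ea sum_split_deg; apply: O_sum => g _; exact: CgO.
Qed.

End Ext.

Lemma Ext_Ppt (k : gradedRing) (cY cX : birObj k) (phi : oK cY -> oK cX) :
  graded_field (oK cY) -> graded_field (oK cX) -> graded_embedding phi ->
  (forall a, phi (oiota cY a) = oiota cX a) ->
  forall O, Ppt (oiota cY) O -> exists O', Ppt (oiota cX) O' /\ phi @^-1` O' = O.
Proof.
move=> fY fX emb compat O [vO hk].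
have [O' [vO' e]] := Ext_main fY fX emb vO.
exists O'; split => //; split => // a.
by rewrite -compat; have := hk a; rewrite -e.
Qed.

Theorem lemma2p1 (k : gradedRing) (cX cY cZ : birObj k)
  (phi_f : oK cY -> oK cX) (f : oX cX -> oX cY)
  (phi_g : oK cZ -> oK cY) (g : oX cY -> oX cZ) :
  is_birObj cX -> is_birObj cY -> is_birObj cZ ->
  is_birMor phi_f f -> is_birMor phi_g g ->
  bir_proper (phi_f \o phi_g) (g \o f) ->
  bir_separated phi_g g \/ bir_proper phi_f f ->
  bir_proper phi_f f /\ bir_proper phi_g g.
Proof.
move=> [[_ fX] _ _ _ _] [[_ fY] _ [PY _] _ _] _ [ef cf _ pf] [eg cg _ pg] [csep csurj] hor.
have fsep : bir_separated phi_f f.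
  by move=> x1 x2 e1 e2; apply: csep => //=; rewrite e1.
have fsurj : forall (y : oX cY) (O : set (oK cX)), Ppt (oiota cX) O ->
    opi cY y = phi_f @^-1` O -> exists x, f x = y /\ opi cX x = O.
  move=> y O PO eO; case: hor => [gsep|[_ fs]]; last exact: fs.
  have ez : opi cZ (g y) = (phi_f \o phi_g) @^-1` O by rewrite pg eO.
  have [x [ex ePO]] := csurj (g y) O PO ez.
  exists x; split => //; apply: gsep => //; by rewrite pf ePO eO.
split; first by split.
split.
  move=> y1 y2 e1 e2.
  have [O' [PO' eO']] := Ext_Ppt fY fX ef cf (PY y1).
  have [x1 [fx1 px1]] := fsurj y1 O' PO' (esym eO').
  have e2' : opi cY y2 = phi_f @^-1` O' by rewrite -e2 eO'.
  have [x2 [fx2 px2]] := fsurj y2 O' PO' e2'.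
  have e12 : x1 = x2 by apply: csep => /=; [rewrite fx1 fx2 e1 | rewrite px1 px2].
  by rewrite -fx1 -fx2 e12.
move=> z O PO eO.
have [O' [PO' eO']] := Ext_Ppt fY fX ef cf PO.
have ez : opi cZ z = (phi_f \o phi_g) @^-1` O' by rewrite eO -eO'.
have [x [ex px]] := csurj z O' PO' ez.
by exists (f x); split => //; rewrite pf px eO'.
Qed.
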